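(* Let $\mathcal{K}$ be a convex cone in a finite-dimensional Euclidean space and ${\mathcal F}_t\unlhd\mathcal{K}$ a face. In the procedure ${\mathcal F}_0=\mathcal{K}$, ${\mathcal F}_{i+1}={\mathcal F}_i\cap d_i^{\perp}$ with $d_i\in{\mathcal F}_i^*$, $d_i\notin{\mathcal F}_i^{\perp}$, $d_i\perp{\mathcal F}_t$ (continued until no such $d_i$ exists), choosing at every step $d_i\in\operatorname{ri}\big({\mathcal F}_i^*\cap {\mathcal F}_t^{\perp}\big)$ yields the minimum possible number of steps, i.e., the number of steps equals the singularity degree of ${\mathcal F}_t$ over $\mathcal{K}$.
   Context: The singularity degree of a face ${\mathcal F}_t\unlhd\mathcal{K}$ over $\mathcal{K}$ is the minimum number $d$ of steps of a sequence ${\mathcal F}_0=\mathcal{K}$, ${\mathcal F}_{i+1}={\mathcal F}_i\cap d_i^{\perp}$, with $d_i\in{\mathcal F}_i^*$, $d_i\notin{\mathcal F}_i^\perp$, $d_i\perp{\mathcal F}_t$, such that ${\mathcal F}_d={\mathcal F}_t$. Here $S^*$ is the dual cone, $S^\perp$ the orthogonal complement, $\operatorname{ri}$ the relative interior. *)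

(* Defs.v *)
From HB Require Import structures.
From mathcomp Require Import all_boot all_order all_algebra.
From mathcomp Require Import reals.
Set Implicit Arguments. Unset Strict Implicit. Unset Printing Implicit Defensive.
Import Order.TTheory GRing.Theory Num.Theory.
Local Open Scope ring_scope.

Section Defs.
Variables (R : realType) (n : nat).
Notation vec := 'rV[R]_n.

Definition vset := vec -> Prop.

Definition dot (u v : vec) : R := \sum_(i < n) u 0 i * v 0 i.

Definition convex_cone (K : vset) : Prop :=
  K 0 /\ (forall x y, K x -> K y -> K (x + y)) /\
  (forall (a : R) x, 0 <= a -> K x -> K (a *: x)).

Definition face (F K : vset) : Prop :=
  convex_cone F /\ (forall x, F x -> K x) /\
  (forall x y, K x -> K y -> F (x + y) -> F x /\ F y).

Definition dual (S : vset) : vset := fun y => forall x, S x -> 0 <= dot x y.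

Definition orth (S : vset) : vset := fun y => forall x, S x -> dot x y = 0.

Definition setI_ (A B : vset) : vset := fun x => A x /\ B x.

Definition aff (C : vset) : vset := fun x =>
  exists (k : nat) (lam : 'I_k -> R) (p : 'I_k -> vec),
    (forall i, C (p i)) /\ \sum_(i < k) lam i = 1 /\ x = \sum_(i < k) lam i *: p i.

(* relative interior: interior of C relative to its affine hull
   (Euclidean open ball of squared radius e) *)
Definition ri (C : vset) : vset := fun x =>
  C x /\ exists e : R, 0 < e /\
    (forall y, aff C y -> dot (y - x) (y - x) < e -> C y).

Definition fr_dir (Fi Ft : vset) (d : vec) : Prop :=
  dual Fi d /\ ~ orth Fi d /\ orth Ft d.

Definition fr_step (Fi Fnext : vset) (d : vec) : Prop :=
  forall x, Fnext x <-> (Fi x /\ dot d x = 0).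

Definition fr_reaches (K Ft : vset) (m : nat) : Prop :=
  exists (F : nat -> vset) (d : nat -> vec),
    (forall x, F 0%N x <-> K x) /\
    (forall i, (i < m)%N -> fr_dir (F i) Ft (d i) /\ fr_step (F i) (F i.+1) (d i)) /\
    (forall x, F m x <-> Ft x).

Definition singularity_degree (K Ft : vset) (s : nat) : Prop :=
  fr_reaches K Ft s /\ (forall m, fr_reaches K Ft m -> (s <= m)%N).

End Defs.

(* Main.v *)
Require Import Defs.
From HB Require Import structures.
From mathcomp Require Import all_boot all_order all_algebra.
From mathcomp Require Import boolp classical_sets reals.
From mathcomp Require Import ring lra.
Import Order.TTheory GRing.Theory Num.Theory.
Local Open Scope ring_scope.
Set Implicit Arguments. Unset Strict Implicit.

Section Aux.
Variables (R : realType) (n : nat).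
Notation vec := 'rV[R]_n.

Lemma dotC (x y : vec) : dot x y = dot y x.
Proof. by apply: eq_bigr => i _; rewrite mulrC. Qed.

Lemma dotDl (x y z : vec) : dot (x + y) z = dot x z + dot y z.
Proof. by rewrite /dot -big_split; apply: eq_bigr => i _; rewrite mxE mulrDl. Qed.

Lemma dotZl (a : R) (x z : vec) : dot (a *: x) z = a * dot x z.
Proof. by rewrite /dot mulr_sumr; apply: eq_bigr => i _; rewrite mxE mulrA. Qed.

Lemma dotNl (x z : vec) : dot (- x) z = - dot x z.
Proof. by rewrite /dot -sumrN; apply: eq_bigr => i _; rewrite mxE mulNr. Qed.

Lemma dot0l (z : vec) : dot 0 z = 0.
Proof. by rewrite /dot big1 // => i _; rewrite mxE mul0r. Qed.

Lemma dotBl (x y z : vec) : dot (x - y) z = dot x z - dot y z.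
Proof. by rewrite dotDl dotNl. Qed.

Lemma dotDr (x y z : vec) : dot z (x + y) = dot z x + dot z y.
Proof. by rewrite dotC dotDl !(dotC z). Qed.
Lemma dotZr (a : R) (x z : vec) : dot z (a *: x) = a * dot z x.
Proof. by rewrite dotC dotZl dotC. Qed.
Lemma dotNr (x z : vec) : dot z (- x) = - dot z x.
Proof. by rewrite dotC dotNl dotC. Qed.
Lemma dotBr (x y z : vec) : dot z (x - y) = dot z x - dot z y.
Proof. by rewrite dotDr dotNr. Qed.
Lemma dot0r (z : vec) : dot z 0 = 0.
Proof. by rewrite dotC dot0l. Qed.
Lemma dot_ge0 (x : vec) : 0 <= dot x x.
Proof. by apply: sumr_ge0 => i _; rewrite -expr2 sqr_ge0. Qed.

Lemma dot_delta (y : vec) (i : 'I_n) : dot y (delta_mx 0 i) = y 0 i.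
Proof.
rewrite /dot (bigD1 i) //= big1 => [|j /negbTE ji]; rewrite !mxE ?eqxx ?ji /=.
  by rewrite mulr1 addr0.
by rewrite mulr0.
Qed.

Lemma onedim (P : vec -> Prop) (s t : vec) :
  (forall x y, P x -> P y -> P (x + y)) ->
  (forall (c : R) x, 0 <= c -> P x -> P (c *: x)) ->
  (forall x, P x -> dot x s = 0 -> 0 <= dot x t) ->
  (forall x, P x -> exists y, P y /\ dot y s = - dot x s) ->
  exists a, forall x, P x -> a * dot x s <= dot x t.
Proof.
move=> hD hZ h0 hS.
have key : forall x y, P x -> P y -> dot x s < 0 -> 0 < dot y s ->
    dot x t / dot x s <= dot y t / dot y s.
  move=> x y Px Py sx sy.
  have nx : 0 <= - dot x s by rewrite oppr_ge0 ltW.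
  have Pz := hD _ _ (hZ (dot y s) x (ltW sy) Px) (hZ (- dot x s) y nx Py).
  have := h0 _ Pz.
  rewrite !dotDl !dotZl mulNr (mulrC (dot y s)) addrN => /(_ erefl) H.
  rewrite ler_pdivlMr // mulrAC ler_ndivrMr //.
  nra.
pose E : set R := fun r => exists x, P x /\ dot x s < 0 /\ r = dot x t / dot x s.
case: (pselect (exists x, P x /\ dot x s < 0)) => [[x0 [Px0 sx0]]|nox].
  have [y0 [Py0 sy0]] := hS _ Px0.
  have sy0p : 0 < dot y0 s by rewrite sy0 oppr_gt0.
  have ubE : forall y, P y -> 0 < dot y s -> ubound E (dot y t / dot y s).
    by move=> y Py sy r [x [Px [sx ->]]]; apply: key.
  exists (sup E) => x Px.
  case: (ltgtP (dot x s) 0) => sx.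
  - have : dot x t / dot x s <= sup E.
      by apply: ub_le_sup; [exists (dot y0 t / dot y0 s); apply: ubE | exists x].
    by rewrite ler_ndivrMr.
  - have : sup E <= dot x t / dot x s.
      by apply: ge_sup; [exists (dot x0 t / dot x0 s); exists x0 | apply: ubE].
    by rewrite ler_pdivlMr.
  - by rewrite sx mulr0; apply: h0.
exists 0 => x Px; rewrite mul0r.
case: (ltgtP (dot x s) 0) => sx.
- by exfalso; apply: nox; exists x.
- have [y [Py sy]] := hS _ Px.
  by exfalso; apply: nox; exists y; rewrite sy oppr_lt0.
- exact: h0.
Qed.

Lemma Glem (fs : seq vec) : forall (C : vset R n) (tau : vec),
  convex_cone C ->
  (forall x, C x -> (forall f, f \in fs -> dot x f = 0) -> 0 <= dot x tau) ->
  (forall x, C x -> exists y, C y /\ forall f, f \in fs -> dot y f = - dot x f) ->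
  exists w, (forall x, (forall f, f \in fs -> dot x f = 0) -> dot x w = 0) /\
            (forall x, C x -> dot x w <= dot x tau).
Proof.
elim: fs => [|g fs IH] C tau hC h0 hS.
  exists 0; split=> x; rewrite dot0r // => Cx.
  by apply: h0.
have [C0 [CD CZ]] := hC.
pose P x := C x /\ forall f, f \in fs -> dot x f = 0.
have [a Ha] : exists a, forall x, P x -> a * dot x g <= dot x tau.
  apply: (@onedim P g tau).
  - move=> x y [Cx Hx] [Cy Hy]; split; first exact: CD.
    by move=> f ff; rewrite dotDl Hx // Hy // addr0.
  - move=> c x c0 [Cx Hx]; split; first exact: CZ.
    by move=> f ff; rewrite dotZl Hx // mulr0.
  - move=> x [Cx Hx] xg; apply: h0 => // f; rewrite inE => /orP[/eqP->//|]; exact: Hx.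
  - move=> x [Cx Hx]; have [y [Cy Hy]] := hS _ Cx.
    exists y; split; last by apply: Hy; rewrite inE eqxx.
    split=> // f ff; rewrite Hy ?Hx ?oppr0 // inE ff orbT //.
have [w' [Hw'0 Hw'le]] : exists w, (forall x, (forall f, f \in fs -> dot x f = 0) -> dot x w = 0) /\
            (forall x, C x -> dot x w <= dot x (tau - a *: g)).
  apply: IH => //.
    move=> x Cx Hx; rewrite dotBr dotZr subr_ge0; exact: Ha.
  move=> x Cx; have [y [Cy Hy]] := hS _ Cx; exists y; split=> // f ff.
  by apply: Hy; rewrite inE ff orbT.
exists (w' + a *: g); split.
  move=> x Hx; rewrite dotDr dotZr Hw'0; last by move=> f ff; apply: Hx; rewrite inE ff orbT.
  by rewrite Hx ?mulr0 ?addr0 // inE eqxx.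
move=> x Cx; have := Hw'le _ Cx; rewrite !dotDr !dotNr !dotZr; lra.
Qed.

Lemma Slem (fs : seq vec) : forall C : vset R n, convex_cone C ->
  (exists x, C x /\ forall y, C y -> ~ (forall f, f \in fs -> dot y f = - dot x f)) ->
  exists d, (forall x, C x -> 0 <= dot x d) /\ exists y, C y /\ dot y d <> 0.
Proof.
elim: fs => [|g fs IH] C hC [x0 [Cx0 Hx0]].
  by exfalso; apply: (Hx0 0); [case: hC | move=> f].
have [C0 [CD CZ]] := hC.
case: (pselect (exists x, C x /\ forall y, C y -> ~ (forall f, f \in fs -> dot y f = - dot x f))).
  by move=> H; apply: IH.
move=> nH.
have sym : forall x, C x -> exists y, C y /\ forall f, f \in fs -> dot y f = - dot x f.
  move=> x Cx; apply: contrapT => ny; apply: nH; exists x; split=> // y Cy Hy.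
  by apply: ny; exists y.
have [y0 [Cy0 Hy0]] := sym _ Cx0.
pose r := dot x0 g + dot y0 g.
pose z0 := x0 + y0.
have Cz0 : C z0 by apply: CD.
have z0f : forall f, f \in fs -> dot z0 f = 0.
  by move=> f ff; rewrite dotDl Hy0 // addrN.
have z0g : dot z0 g = r by rewrite dotDl.
have r0 : r != 0.
  apply/negP => /eqP r0; apply: (Hx0 y0 Cy0) => f; rewrite inE => /orP[/eqP->|ff].
    by apply/eqP; rewrite -addr_eq0 addrC -/r r0.
  exact: Hy0.
have pos : forall z, C z -> (forall f, f \in fs -> dot z f = 0) -> 0 <= dot z (r *: g).
  move=> z Cz Hz; rewrite dotZr; case: (lerP 0 (r * dot z g)) => // neg.
  exfalso; pose c := r ^+ 2 / (- (r * dot z g)).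
  have c0 : 0 <= c by rewrite divr_ge0 ?sqr_ge0 // oppr_ge0 ltW.
  have zg0 : dot z g != 0 by apply/eqP => e; move: neg; rewrite e mulr0 ltxx.
  have cz : c * dot z g = - r.
    rewrite /c; field; apply/andP; split => //.
  apply: (Hx0 (y0 + c *: z)); first by apply: CD => //; apply: CZ.
  move=> f; rewrite inE => /orP[/eqP->|ff].
    rewrite dotDl dotZl cz; apply/eqP; rewrite /r; apply/eqP; lra.
  by rewrite dotDl dotZl Hz // mulr0 addr0 Hy0.
have [w [Hw0 Hwle]] := Glem hC pos sym.
exists (r *: g - w); split.
  by move=> x Cx; rewrite dotBr subr_ge0; apply: Hwle.
exists z0; split=> //; rewrite dotBr Hw0 // dotZr z0g subr0.
by apply/eqP; rewrite mulf_neq0.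
Qed.

Lemma Core (C : vset R n) : convex_cone C ->
  forall x, C x -> ~ C (- x) ->
  exists d, (forall x, C x -> 0 <= dot x d) /\ exists y, C y /\ dot y d <> 0.
Proof.
move=> hC x Cx nCx.
apply: (@Slem [seq delta_mx 0 i | i <- enum 'I_n]) => //.
exists x; split=> // y Cy Hy; apply: nCx.
have -> : - x = y; last by [].
apply/rowP => i; rewrite mxE -!dot_delta; apply/esym/Hy.
by apply: map_f; rewrite mem_enum.
Qed.
End Aux.

Section Main.
Variables (R : realType) (n : nat) (K Ft : vset R n).
Hypotheses (hK : convex_cone K) (hF : face Ft K).
Variables (N : nat) (F : nat -> vset R n) (d : nat -> 'rV[R]_n).
Hypothesis h0 : forall x, F 0%N x <-> K x.
Hypothesis hs : forall i, (i < N)%N ->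
     fr_dir (F i) Ft (d i) /\
     ri (setI_ (dual (F i)) (orth Ft)) (d i) /\
     fr_step (F i) (F i.+1) (d i).
Hypothesis hend : ~ exists d', fr_dir (F N) Ft d'.

Lemma chain i : (i <= N)%N ->
  convex_cone (F i) /\ (forall x, F i x -> K x) /\ (forall x, Ft x -> F i x).
Proof.
have [FC [FK Ff]] := hF.
elim: i => [|i IH] iN.
  split; last split.
  - have [K0 [KD KZ]] := hK; split; first by apply/h0.
    split; first by move=> x y /h0 ? /h0 ?; apply/h0; apply: KD.
    by move=> a x a0 /h0 ?; apply/h0; apply: KZ.
  - by move=> x /h0.
  - by move=> x /FK /h0.
have iN' : (i < N)%N by [].
have [[C0 [CD CZ]] [IK IF]] := IH (ltnW iN').
have [[_ [_ od]] [_ st]] := hs iN'.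
split; last split.
- split; first by apply/st; split => //; rewrite dot0r.
  split.
    move=> x y /st [Fx dx] /st [Fy dy]; apply/st; split; first exact: CD.
    by rewrite dotDr dx dy addr0.
  by move=> a x a0 /st [Fx dx]; apply/st; split; [exact: CZ | rewrite dotZr dx mulr0].
- by move=> x /st [/IK].
- move=> x Fx; apply/st; split; first exact: IF.
  by rewrite dotC; apply: od.
Qed.

Lemma greedy i : (i < N)%N -> forall e, dual (F i) e -> orth Ft e ->
  forall x, F i x -> dot (d i) x = 0 -> dot x e = 0.
Proof.
move=> iN e De Oe x Fx dx.
have [_ [[[Dd Od] [E [E0 HE]]] _]] := hs iN.
pose q := dot (d i - e) (d i - e).
have q0 : 0 <= q := dot_ge0 _.
pose eps := E / (E + q).
have Eq0 : 0 < E + q by lra.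
have eps0 : 0 < eps by rewrite divr_gt0.
have epsE : eps * (E + q) = E by rewrite /eps divfK // gt_eqF.
pose y := (1 + eps) *: d i - eps *: e.
have Sy : setI_ (dual (F i)) (orth Ft) y.
  apply: HE.
    exists 2%N, (fun j : 'I_2 => if j == ord0 then 1 + eps else - eps),
      (fun j : 'I_2 => if j == ord0 then d i else e).
    split; first by move=> j; case: (j == ord0).
    rewrite !big_ord_recl !big_ord0 /= !addr0; split; first by rewrite addrK.
    by rewrite scaleNr.
  have -> : y - d i = eps *: (d i - e).
    by rewrite /y scalerDl scale1r scalerBr; rewrite addrAC (addrC (d i)) addrK.
  rewrite dotZl dotZr -/q; nra.
have := (proj1 Sy) x Fx.
rewrite /y dotBr !dotZr (dotC x (d i)) dx mulr0 sub0r oppr_ge0.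
have := De x Fx; move: eps0; nra.
Qed.

Lemma reachN x : F N x <-> Ft x.
Proof.
have [[C0 [CD CZ]] [NK NF]] := chain (leqnn N).
have [[F0 [FD FZ]] [FK Fface]] := hF.
split; last exact: NF.
move=> Fx; apply: contrapT => nFx; apply: hend.
pose C : vset R n := fun c => exists z w, F N z /\ Ft w /\ c = z - w.
have hC : convex_cone C.
  split; first by exists 0, 0; rewrite subr0.
  split.
    move=> _ _ [z1 [w1 [z1F [w1F ->]]]] [z2 [w2 [z2F [w2F ->]]]].
    exists (z1 + z2), (w1 + w2); do ![split; first by auto].
    by rewrite opprD addrACA.
  move=> a _ a0 [z [w [zF [wF ->]]]]; exists (a *: z), (a *: w).
  by do ![split; first by auto]; rewrite scalerBr.
have Cx : C x by exists x, 0; rewrite subr0.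
have nCx : ~ C (- x).
  move=> [z [w [zF [wF e]]]]; apply: nFx.
  have : Ft (x + z) by have -> : x + z = w by rewrite -[x]opprK e opprB subrK.
  by move/Fface => /(_ (NK _ Fx) (NK _ zF)) [].
have [dd [ddp [c [[z [w [zF [wF ->]]]] cne]]]] := Core hC Cx nCx.
have dz : forall z, F N z -> 0 <= dot z dd.
  by move=> z' zF'; apply: ddp; exists z', 0; rewrite subr0.
have dw : forall w, Ft w -> dot w dd = 0.
  move=> w' wF'; apply/eqP; rewrite eq_le; apply/andP; split.
    have := ddp (0 - w'); rewrite sub0r dotNl oppr_ge0; apply; exists 0, w'.
    by rewrite sub0r.
  by apply: dz; apply: NF.
exists dd; split; first by move=> y; apply: dz.
split; last by move=> y /dw.
by move=> od; apply: cne; rewrite dotBl od // dw // subrr.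
Qed.

Lemma minimal m : fr_reaches K Ft m -> (N <= m)%N.
Proof.
move=> [G [e [hG0 [hGs hGm]]]]; rewrite leqNgt; apply/negP => mN.
have incl : forall j, (j <= m)%N -> forall x, F j x -> G j x.
  elim=> [|j IH] jm x.
    by move/h0/hG0.
  have jm' : (j < m)%N by [].
  have jN : (j < N)%N by apply: ltn_trans mN.
  have [_ [_ st]] := hs jN.
  have [[De [_ Oe]] stG] := hGs j jm'.
  move=> /st [Fx dx]; apply/stG; split; first by apply: IH => //; apply: ltnW.
  rewrite dotC; apply: (greedy jN) => //.
  by move=> z Fz; apply: De; apply: IH => //; apply: ltnW.
have [[_ [nod od]] _] := hs mN.
have [_ [_ FtF]] := chain (ltnW mN).
apply: nod => x Fx; apply: od; apply/hGm; exact: incl.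
Qed.

Lemma main_aux : singularity_degree K Ft N.
Proof.
split; last exact: minimal.
exists F, d; split=> //; split; last exact: reachN.
by move=> i iN; have [? [_ ?]] := hs iN.
Qed.
End Main.

Theorem mainTheorem3 (R : realType) (n : nat) (K Ft : vset R n)
  (hK : convex_cone K) (hF : face Ft K)
  (N : nat) (F : nat -> vset R n) (d : nat -> 'rV[R]_n) :
  (forall x, F 0%N x <-> K x) ->
  (forall i, (i < N)%N ->
     fr_dir (F i) Ft (d i) /\
     ri (setI_ (dual (F i)) (orth Ft)) (d i) /\
     fr_step (F i) (F i.+1) (d i)) ->
  (~ exists d', fr_dir (F N) Ft d') ->
  singularity_degree K Ft N.
Proof.
move=> h0 hs hend; exact: (main_aux hK hF h0 hs hend).
Qed.
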